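(* Let $n\geq 2$ and $m\geq 1$ be integers, let $K$ be an infinite field, and let $p(x_1,\ldots,x_m)\in K\langle x_1,\ldots,x_m\rangle$ be a noncommutative polynomial with zero constant term. Suppose $\mathrm{ord}(p)=r$ with $1<r<n-1$. Then \[ p(T_n(K))+p(T_n(K))=T_n(K)^{(r-1)}, \] i.e. every matrix in $T_n(K)^{(r-1)}$ is a sum of two elements of $p(T_n(K))$, and every such sum lies in $T_n(K)^{(r-1)}$. In particular, if $r=n-2$, then $p(T_n(K))=T_n(K)^{(n-3)}$.
   Context: $T_n(K)$ denotes the algebra of $n\times n$ upper triangular matrices over $K$. For an integer $t\geq 0$, $T_n(K)^{(t)}$ denotes the set of upper triangular $n\times n$ matrices whose $(i,j)$ entries are zero whenever $j-i\leq t$ (so $T_n(K)^{(t)}$ is the $(t+1)$-st power $J^{t+1}$ of the Jacobson radical $J$ of $T_n(K)$). For an algebra $\mathcal{A}$, $p(\mathcal{A})=\{p(a_1,\ldots,a_m): a_1,\ldots,a_m\in\mathcal{A}\}$, and $p(\mathcal{A})+p(\mathcal{A})=\{a+b: a,b\in p(\mathcal{A})\}$. The order $\mathrm{ord}(p)$ of a polynomial $p$ with zero constant term is the least positive integer $r$ such that $p(T_r(K))=\{0\}$ but $p(T_{r+1}(K))\neq\{0\}$, where $T_1(K)=K$; $p$ has order $0$ if $p(K)\neq\{0\}$. *)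

(* Defs.v *)
From HB Require Import structures.
From mathcomp Require Import all_boot all_order all_algebra.
Set Implicit Arguments. Unset Strict Implicit. Unset Printing Implicit Defensive.
Import GRing.Theory.
Local Open Scope ring_scope.

(* A noncommutative polynomial in K<x_1,...,x_m> is represented as a finite
   formal sum of terms c * x_{w_1} ... x_{w_l}, i.e. a list of pairs
   (coefficient, word); the word is a sequence of variable indices 'I_m. *)
Definition ncpoly (K : fieldType) (m : nat) := seq (K * seq 'I_m).

Definition const_term (K : fieldType) (m : nat) (p : ncpoly K m) : K :=
  \sum_(t <- p | nilp t.2) t.1.

Definition nc_eval (K : fieldType) (m k : nat) (p : ncpoly K m)
  (a : 'I_m -> 'M[K]_k) : 'M[K]_k :=
  \sum_(t <- p) t.1 *: \big[mulmx/1%:M]_(i <- t.2) a i.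

Definition upper_tri (K : fieldType) (k : nat) (A : 'M[K]_k) : Prop :=
  forall i j : 'I_k, (j < i)%N -> A i j = 0.

(* T_k(K)^(t): entries (i,j) are zero whenever j - i <= t (incl. j < i) *)
Definition in_Tt (K : fieldType) (k t : nat) (A : 'M[K]_k) : Prop :=
  forall i j : 'I_k, (j <= i + t)%N -> A i j = 0.

Definition in_pimage (K : fieldType) (m k : nat) (p : ncpoly K m)
  (A : 'M[K]_k) : Prop :=
  exists a : 'I_m -> 'M[K]_k, (forall l, upper_tri (a l)) /\ nc_eval p a = A.

Definition vanishes_on_T (K : fieldType) (m : nat) (p : ncpoly K m) (k : nat) : Prop :=
  forall A : 'M[K]_k, in_pimage p A -> A = 0.

(* ord(p) = r, for r positive: r is the least positive integer with
   p(T_r(K)) = {0} but p(T_{r+1}(K)) <> {0}  (T_1(K) = 'M_1 ~ K). *)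
Definition has_order (K : fieldType) (m : nat) (p : ncpoly K m) (r : nat) : Prop :=
  (0 < r)%N /\ vanishes_on_T p r /\ ~ vanishes_on_T p r.+1 /\
  (forall s, (0 < s)%N -> (s < r)%N -> ~ (vanishes_on_T p s /\ ~ vanishes_on_T p s.+1)).

Definition infinite_field (K : fieldType) : Prop :=
  forall s : seq K, exists x : K, x \notin s.

(* Main.v *)
Require Import Defs.
From mathcomp Require Import all_boot all_order all_algebra.
From mathcomp Require Import zify.
From Stdlib Require Import Classical.
Set Implicit Arguments. Unset Strict Implicit. Unset Printing Implicit Defensive.
Import GRing.Theory.
Local Open Scope ring_scope.


Lemma nc_eval_nonnil (K : fieldType) (m k : nat) (p : ncpoly K m) (a : 'I_m -> 'M[K]_k) :
  const_term p = 0 ->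
  nc_eval p a = \sum_(t <- p | ~~ nilp t.2) t.1 *: \big[mulmx/1%:M]_(i <- t.2) a i.
Proof.
move=> hc; rewrite /nc_eval (bigID (fun t : K * seq 'I_m => nilp t.2)) /=.
rewrite (eq_bigr (fun t : K * seq 'I_m => t.1 *: (1%:M : 'M[K]_k))).
  by rewrite -scaler_suml -/(const_term p) hc scale0r add0r.
by case=> c [|x w] //= _; rewrite big_nil.
Qed.

Lemma hom_eval (K : fieldType) (m k k' : nat) (phi : 'M[K]_k -> 'M[K]_k')
  (S : 'M[K]_k -> Prop) (p : ncpoly K m) (a : 'I_m -> 'M[K]_k) :
  const_term p = 0 ->
  (forall A B, phi (A + B) = phi A + phi B) ->
  (forall c A, phi (c *: A) = c *: phi A) ->
  phi 0 = 0 ->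
  (forall A B, S A -> S B -> S (A *m B)) ->
  (forall A B, S A -> S B -> phi (A *m B) = phi A *m phi B) ->
  (forall l, S (a l)) ->
  phi (nc_eval p a) = nc_eval p (fun l => phi (a l)).
Proof.
move=> hc hD hZ h0 hSM hM hS.
have hw : forall x w, S (\big[mulmx/1%:M]_(i <- x :: w) a i) /\
   phi (\big[mulmx/1%:M]_(i <- x :: w) a i) = \big[mulmx/1%:M]_(i <- x :: w) phi (a i).
  move=> x w; elim: w x => [|y w IH] x.
    by rewrite !big_cons !big_nil !mulmx1.
  have [IH1 IH2] := IH y.
  have E1 : forall kk (f : 'I_m -> 'M[K]_kk) z s, \big[mulmx/1%:M]_(i <- z :: s) f i = f z *m \big[mulmx/1%:M]_(i <- s) f i.
    by move=> kk f z s; rewrite big_cons.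
  rewrite (E1 _ a x (y :: w)) (E1 _ (fun i => phi (a i)) x (y :: w)); split; first exact: hSM.
  by rewrite hM // IH2.
rewrite !nc_eval_nonnil //.
rewrite (big_morph phi hD h0); apply: eq_bigr; case=> c [|x w] //= _.
by rewrite hZ (proj2 (hw x w)).
Qed.


Lemma sum_sub (K : fieldType) (k n : nat) (f : 'I_k -> 'I_n) (G : 'I_n -> K) :
  injective f -> (forall z, z \notin codom f -> G z = 0) ->
  \sum_z G z = \sum_w G (f w).
Proof.
move=> inj hG.
have -> : \sum_w G (f w) = \sum_(i <- codom f) G i by rewrite big_image.
rewrite [RHS]big_uniq; last by have := introT (injectiveP f) inj.
rewrite [LHS](bigID (mem (codom f))) /= [X in _ + X]big1 ?addr0 //.
Qed.

Lemma upper_mul (K : fieldType) (n : nat) (A B : 'M[K]_n) :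
  upper_tri A -> upper_tri B -> upper_tri (A *m B).
Proof.
move=> hA hB i j hji; rewrite mxE big1 // => z _.
case: (ltnP z i) => hz; first by rewrite hA // mul0r.
by rewrite hB ?mulr0 //; apply: leq_trans hji hz.
Qed.

Definition comp (K : fieldType) (k n : nat) (f : 'I_k -> 'I_n) (A : 'M[K]_n) : 'M[K]_k :=
  \matrix_(u, v) A (f u) (f v).

Lemma comp_mul (K : fieldType) (k n s : nat) (f : 'I_k -> 'I_n) (A B : 'M[K]_n) :
  (forall u, val (f u) = s + u)%N ->
  upper_tri A -> upper_tri B -> comp f (A *m B) = comp f A *m comp f B.
Proof.
move=> hf hA hB; apply/matrixP => u v; rewrite !mxE.
have inj : injective f by move=> x y /(congr1 val); rewrite !hf => /addnI /val_inj.
rewrite (@sum_sub K k n f (fun z => A (f u) z * B z (f v)) inj) //.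
  by apply: eq_bigr => w _; rewrite !mxE.
move=> z hz.
case: (ltnP z s) => h1.
  by rewrite hA ?mul0r // hf; apply: leq_trans h1 (leq_addr _ _).
case: (ltnP z (s + k)) => h2.
  have hw : (z - s < k)%N by rewrite ltn_subLR.
  exfalso; move/negP: hz; apply; apply/codomP; exists (Ordinal hw).
  by apply: val_inj; rewrite /= hf subnKC.
by rewrite hB ?mulr0 // hf; apply: leq_trans h2; rewrite ltn_add2l.
Qed.

Lemma upper_eval (K : fieldType) (m n : nat) (p : ncpoly K m) (X : 'I_m -> 'M[K]_n) :
  (forall l, upper_tri (X l)) -> upper_tri (nc_eval p X).
Proof.
move=> hX i j hji; rewrite /nc_eval summxE big1 // => t _; rewrite mxE.
suff -> : (\big[mulmx/1%:M]_(i0 <- t.2) X i0) i j = 0 by rewrite mulr0.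
elim: t.2 i j hji => [|x w IH] i j hji.
  by rewrite big_nil mxE; case: eqP => // hij; move: hji; rewrite hij ltnn.
rewrite big_cons; apply: (upper_mul (hX x)) => //.
Qed.

Lemma img_in_T (K : fieldType) (m n r : nat) (p : ncpoly K m) (X : 'I_m -> 'M[K]_n) :
  const_term p = 0 -> vanishes_on_T p r -> (0 < r)%N -> (r <= n)%N ->
  (forall l, upper_tri (X l)) -> in_Tt r.-1 (nc_eval p X).
Proof.
move=> hc hv hr0 hrn hX i j hij.
pose s := minn i (n - r).
have hs : forall u : 'I_r, (s + u < n)%N.
  move=> u; have := ltn_ord u; rewrite /s; lia.
pose f (u : 'I_r) : 'I_n := Ordinal (hs u).
have hf : forall u, val (f u) = (s + u)%N by [].
have hcomp : comp f (nc_eval p X) = nc_eval p (fun l => comp f (X l)).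
  apply: (hom_eval (S := @upper_tri K n)) => //.
  - by move=> A B; apply/matrixP => u v; rewrite !mxE.
  - by move=> c A; apply/matrixP => u v; rewrite !mxE.
  - by apply/matrixP => u v; rewrite !mxE.
  - exact: upper_mul.
  - by move=> A B hA hB; apply: (comp_mul hf).
have h0 : comp f (nc_eval p X) = 0.
  rewrite hcomp; apply: hv; exists (fun l => comp f (X l)); split => //.
  move=> l u v hvu; rewrite mxE; apply: hX; rewrite !hf ltn_add2l //.
have hsi : (s <= i)%N by rewrite /s; lia.
have hi : (i - s < r)%N by rewrite /s; have := ltn_ord i; lia.
have hj : (j - s < r)%N by rewrite /s; have := ltn_ord j; lia.
case: (ltnP j s) => hjs.
  apply: (upper_eval _ hX); rewrite /s in hjs *; lia.
have := congr1 (fun M : 'M[K]_r => M (Ordinal hi) (Ordinal hj)) h0; rewrite !mxE.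
have -> : f (Ordinal hi) = i by apply: val_inj; rewrite /= subnKC.
by have -> : f (Ordinal hj) = j by apply: val_inj; rewrite /= subnKC.
Qed.


Lemma LR_eval (K : fieldType) (m k k' : nat) (p : ncpoly K m) (a : 'I_m -> 'M[K]_k)
  (L : 'M[K]_(k', k)) (R : 'M[K]_(k, k')) :
  const_term p = 0 -> R *m L = 1%:M ->
  L *m nc_eval p a *m R = nc_eval p (fun l => L *m a l *m R).
Proof.
move=> hc hRL.
apply: (hom_eval (phi := fun A => L *m A *m R) (S := fun _ => True)) => //.
- by move=> A B; rewrite mulmxDr mulmxDl.
- by move=> c A; rewrite -scalemxAr -scalemxAl.
- by rewrite mulmx0 mul0mx.
- by move=> A B _ _; rewrite !mulmxA -[L *m A *m R *m L]mulmxA hRL mulmx1.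
Qed.

Lemma conj_img (K : fieldType) (m n : nat) (p : ncpoly K m) (Y U V : 'M[K]_n) :
  const_term p = 0 -> upper_tri U -> upper_tri V -> V *m U = 1%:M ->
  in_pimage p Y -> in_pimage p (U *m Y *m V).
Proof.
move=> hc hU hV hVU [X [hX <-]].
exists (fun l => U *m X l *m V); split; last by rewrite LR_eval.
by move=> l; apply: upper_mul => //; apply: upper_mul.
Qed.

Definition Pm (K : fieldType) (k n : nat) (s : 'I_k -> 'I_n) : 'M[K]_(k, n) :=
  \matrix_(u, x) (x == s u)%:R.

Lemma Pm_mulT (K : fieldType) (k n : nat) (s : 'I_k -> 'I_n) :
  injective s -> Pm K s *m (Pm K s)^T = 1%:M.
Proof.
move=> inj; apply/matrixP => u v; rewrite !mxE.
rewrite (bigD1 (s u)) //= !mxE eqxx mul1r big1 ?addr0.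
  by rewrite (inj_eq inj) eq_sym.
by move=> x /negbTE hx; rewrite !mxE hx mul0r.
Qed.

Definition emb (K : fieldType) (k n : nat) (s : 'I_k -> 'I_n) (A : 'M[K]_k) : 'M[K]_n :=
  (Pm K s)^T *m A *m Pm K s.

Lemma emb_entry (K : fieldType) (k n : nat) (s : 'I_k -> 'I_n) (A : 'M[K]_k) x y :
  emb s A x y = \sum_w \sum_u ((x == s u)%:R * A u w) * (y == s w)%:R.
Proof. by rewrite /emb !mxE; apply: eq_bigr => w _; rewrite !mxE mulr_suml; apply: eq_bigr => u _; rewrite !mxE. Qed.

Lemma emb_ss (K : fieldType) (k n : nat) (s : 'I_k -> 'I_n) (A : 'M[K]_k) u v :
  injective s -> emb s A (s u) (s v) = A u v.
Proof.
move=> inj; rewrite emb_entry (bigD1 v) //= [X in _ + X]big1 ?addr0.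
  rewrite (bigD1 u) //= !eqxx !mulr1n mul1r mulr1 big1 ?addr0 // => u' hu'.
  by rewrite (inj_eq inj) eq_sym (negbTE hu') !mul0r.
move=> w hw; rewrite big1 // => u' _.
by rewrite !(inj_eq inj) (eq_sym v) (negbTE hw) mulr0.
Qed.

Lemma emb_nx (K : fieldType) (k n : nat) (s : 'I_k -> 'I_n) (A : 'M[K]_k) x y :
  (forall u, s u != x) -> emb s A x y = 0.
Proof.
move=> h; rewrite emb_entry big1 // => w _; rewrite big1 ?mul0r // => u _.
by rewrite (eq_sym x) (negbTE (h u)) !mul0r.
Qed.

Lemma emb_ny (K : fieldType) (k n : nat) (s : 'I_k -> 'I_n) (A : 'M[K]_k) x y :
  (forall u, s u != y) -> emb s A x y = 0.
Proof.
move=> h; rewrite emb_entry big1 // => w _.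
by rewrite (eq_sym y) (negbTE (h w)) big1 // => u _; rewrite mulr0.
Qed.

Lemma emb_upper (K : fieldType) (k n : nat) (s : 'I_k -> 'I_n) (A : 'M[K]_k) :
  (forall u v : 'I_k, (u < v)%N -> (s u < s v)%N) -> upper_tri A -> upper_tri (emb s A).
Proof.
move=> hs hA x y hyx.
have inj : injective s.
  move=> u v huv; case: (ltngtP u v) => h.
  - by have := hs _ _ h; rewrite huv ltnn.
  - by have := hs _ _ h; rewrite huv ltnn.
  - exact: val_inj.
have [hx|hx] := boolP [exists z, s z == x]; last first.
  by apply: emb_nx => u0; apply/negP => hu0; move/negP: hx; apply; apply/existsP; exists u0.
have [hy|hy] := boolP [exists z, s z == y]; last first.
  by apply: emb_ny => u0; apply/negP => hu0; move/negP: hy; apply; apply/existsP; exists u0.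
move/existsP: hx => [u1 /eqP hu]; move/existsP: hy => [v1 /eqP hv].
rewrite -hu -hv emb_ss // hA //.
case: (ltngtP v1 u1) => // h.
  by have := hs _ _ h; rewrite hu hv ltnNge (ltnW hyx).
by move: hyx; rewrite -hu -(val_inj h) hv ltnn.
Qed.

Lemma emb_eval (K : fieldType) (m k n : nat) (p : ncpoly K m) (s : 'I_k -> 'I_n) (a : 'I_m -> 'M[K]_k) :
  const_term p = 0 -> injective s ->
  emb s (nc_eval p a) = nc_eval p (fun l => emb s (a l)).
Proof. by move=> hc inj; rewrite /emb LR_eval // Pm_mulT. Qed.


Definition dgv (K : fieldType) (n : nat) (i : 'I_n) (c : K) : 'rV[K]_n :=
  \row_x (if x == i then c else 1).

Lemma dconj_entry (K : fieldType) (n : nat) (Y : 'M[K]_n) i c x y :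
  (diag_mx (dgv i c) *m Y *m diag_mx (dgv i c^-1)) x y =
  (if x == i then c else 1) * Y x y * (if y == i then c^-1 else 1).
Proof. by rewrite mul_mx_diag mul_diag_mx !mxE. Qed.

Lemma diag_upper (K : fieldType) (n : nat) (d : 'rV[K]_n) : upper_tri (diag_mx d).
Proof. by move=> x y hyx; rewrite mxE; case: eqP => // h; move: hyx; rewrite h ltnn. Qed.

Lemma dconj_img (K : fieldType) (m n : nat) (p : ncpoly K m) (Y : 'M[K]_n) i c :
  const_term p = 0 -> c != 0 -> in_pimage p Y ->
  in_pimage p (diag_mx (dgv i c) *m Y *m diag_mx (dgv i c^-1)).
Proof.
move=> hc hc0 hY; apply: conj_img => //; try exact: diag_upper.
rewrite mulmx_diag; apply/matrixP => x y; rewrite !mxE.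
case: (x == i); last by rewrite mulr1.
by rewrite mulVf.
Qed.

Definition el (K : fieldType) (n : nat) (a b : 'I_n) (t : K) : 'M[K]_n :=
  1%:M + t *: delta_mx a b.

Lemma el_entry_l (K : fieldType) (n : nat) (Y : 'M[K]_n) (a b : 'I_n) t x y :
  (el a b t *m Y) x y = Y x y + (x == a)%:R * (t * Y b y).
Proof.
rewrite /el mulmxDl mul1mx -scalemxAl !mxE; congr (_ + _).
rewrite (bigD1 b) //= !mxE eqxx andbT big1 ?addr0.
  by case: (x == a); rewrite ?mul1r ?mul0r ?mulr0.
by move=> z hz; rewrite !mxE (negbTE hz) andbF mul0r.
Qed.

Lemma el_entry_r (K : fieldType) (n : nat) (Y : 'M[K]_n) (a b : 'I_n) t x y :
  (Y *m el a b t) x y = Y x y + (y == b)%:R * (Y x a * t).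
Proof.
rewrite /el mulmxDr mulmx1 -scalemxAr !mxE; congr (_ + _).
rewrite (bigD1 a) //= !mxE eqxx big1 ?addr0.
  by case: (y == b); rewrite ?mul1r ?mul0r ?mulr0 ?mulr1 // mulrC.
by move=> z hz; rewrite !mxE (negbTE hz) mulr0.
Qed.

Lemma elconj_entry (K : fieldType) (n : nat) (Y : 'M[K]_n) (a b : 'I_n) t x y :
  upper_tri Y -> (a < b)%N ->
  (el a b t *m Y *m el a b (- t)) x y =
  Y x y + (x == a)%:R * (t * Y b y) - (y == b)%:R * (Y x a * t).
Proof.
move=> hY hab; rewrite el_entry_r !el_entry_l (hY b a hab) mulr0 mulr0 addr0.
by rewrite !mulrN.
Qed.

Lemma el_mul (K : fieldType) (n : nat) (a b : 'I_n) (s t : K) :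
  a != b -> el a b s *m el a b t = el a b (s + t).
Proof.
move=> hab; rewrite /el mulmxDl !mulmxDr !mul1mx mulmx1.
rewrite -scalemxAl -scalemxAr mul_delta_mx_0 1?eq_sym // !scaler0 addr0 scalerDl.
by rewrite -addrA [t *: _ + _]addrC.
Qed.

Lemma el_upper (K : fieldType) (n : nat) (a b : 'I_n) (t : K) :
  (a < b)%N -> upper_tri (el a b t).
Proof.
move=> hab x y hyx; rewrite !mxE; case: eqP => [h|_]; first by move: hyx; rewrite h ltnn.
case: (x =P a) => [hx|]; case: (y =P b) => [hy|] //=; rewrite ?mulr0 ?add0r //.
by move: hyx; rewrite hx hy ltnNge (ltnW hab).
Qed.

Lemma elconj_img (K : fieldType) (m n : nat) (p : ncpoly K m) (Y : 'M[K]_n) (a b : 'I_n) t :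
  const_term p = 0 -> (a < b)%N -> in_pimage p Y ->
  in_pimage p (el a b t *m Y *m el a b (- t)).
Proof.
move=> hc hab hY; apply: conj_img => //; try exact: el_upper.
rewrite el_mul ?addNr; last by rewrite neq_ltn hab.
by rewrite /el scale0r addr0.
Qed.


Definition pf (K : fieldType) (f : K -> K) := exists q : {poly K}, forall t, f t = q.[t].

Lemma pf_const (K : fieldType) (c : K) : pf (fun _ => c).
Proof. by exists c%:P => t; rewrite hornerC. Qed.

Lemma pf_id (K : fieldType) : pf (fun t : K => t).
Proof. by exists 'X => t; rewrite hornerX. Qed.

Lemma pf_add (K : fieldType) (f g : K -> K) : pf f -> pf g -> pf (fun t => f t + g t).
Proof. by move=> [q hq] [r hr]; exists (q + r) => t; rewrite hornerD hq hr. Qed.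

Lemma pf_mul (K : fieldType) (f g : K -> K) : pf f -> pf g -> pf (fun t => f t * g t).
Proof. by move=> [q hq] [r hr]; exists (q * r) => t; rewrite hornerM hq hr. Qed.

Lemma pf_sum (K : fieldType) (I : Type) (r : seq I) (P : pred I) (F : I -> K -> K) :
  (forall i, pf (F i)) -> pf (fun t => \sum_(i <- r | P i) F i t).
Proof.
move=> hF; elim: r => [|i r IH].
  by exists 0 => t; rewrite big_nil horner0.
case: (boolP (P i)) => hi.
  have [q hq] := pf_add (hF i) IH.
  by exists q => t; rewrite big_cons hi -hq.
by have [q hq] := IH; exists q => t; rewrite big_cons (negbTE hi) -hq.
Qed.

Lemma pf_prod (K : fieldType) (I : Type) (r : seq I) (P : pred I) (F : I -> K -> K) :
  (forall i, pf (F i)) -> pf (fun t => \prod_(i <- r | P i) F i t).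
Proof.
move=> hF; elim: r => [|i r IH].
  by exists 1 => t; rewrite big_nil hornerC.
case: (boolP (P i)) => hi.
  have [q hq] := pf_mul (hF i) IH.
  by exists q => t; rewrite big_cons hi -hq.
by have [q hq] := IH; exists q => t; rewrite big_cons (negbTE hi) -hq.
Qed.

Definition pfm (K : fieldType) (k : nat) (M : K -> 'M[K]_k) := forall x y, pf (fun t => M t x y).


Lemma pfm_mul (K : fieldType) (k : nat) (M N : K -> 'M[K]_k) :
  pfm M -> pfm N -> pfm (fun t => M t *m N t).
Proof.
move=> hM hN x y.
have [q hq] := @pf_sum K _ (index_enum 'I_k) xpredT (fun z t => M t x z * N t z y)
  (fun z => pf_mul (hM x z) (hN z y)).
by exists q => t; rewrite mxE -hq.
Qed.

Lemma pfm_add (K : fieldType) (k : nat) (M N : K -> 'M[K]_k) :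
  pfm M -> pfm N -> pfm (fun t => M t + N t).
Proof.
move=> hM hN x y; have [q hq] := pf_add (hM x y) (hN x y).
by exists q => t; rewrite mxE hq.
Qed.

Lemma pfm_scale (K : fieldType) (k : nat) (c : K) (M : K -> 'M[K]_k) :
  pfm M -> pfm (fun t => c *: M t).
Proof.
move=> hM x y; have [q hq] := pf_mul (pf_const c) (hM x y).
by exists q => t; rewrite mxE hq.
Qed.

Lemma pfm_const (K : fieldType) (k : nat) (A : 'M[K]_k) : pfm (fun _ => A).
Proof. by move=> x y; apply: pf_const. Qed.

Lemma pfm_lin (K : fieldType) (k : nat) (A B : 'M[K]_k) : pfm (fun t => A + t *: B).
Proof.
move=> x y; have [q hq] := pf_add (pf_const (A x y)) (pf_mul (@pf_id K) (pf_const (B x y))).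
by exists q => t; rewrite !mxE hq.
Qed.

Lemma pfm_eval (K : fieldType) (m k : nat) (p : ncpoly K m) (a : K -> 'I_m -> 'M[K]_k) :
  (forall l, pfm (fun t => a t l)) -> pfm (fun t => nc_eval p (a t)).
Proof.
move=> ha.
have hw : forall w : seq 'I_m, pfm (fun t => \big[mulmx/1%:M]_(i <- w) a t i).
  elim=> [|x w IH] i j.
    by have [q hq] := pf_const (1%:M i j : K); exists q => t; rewrite big_nil -hq.
  have [q hq] := pfm_mul (ha x) IH i j.
  by exists q => t; rewrite big_cons -hq.
move=> i j.
have [q hq] := @pf_sum K _ p xpredT (fun u t => (u.1 *: \big[mulmx/1%:M]_(i0 <- u.2) a t i0) i j)
  (fun u => pfm_scale u.1 (hw u.2) i j).
by exists q => t; rewrite /nc_eval summxE -hq.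
Qed.

Lemma nonroot (K : fieldType) (q : {poly K}) :
  infinite_field K -> q != 0 -> exists t, q.[t] != 0.
Proof.
move=> hK hq.
have hs : forall k, exists s : seq K, uniq s /\ size s = k.
  elim=> [|k [s [hu hsz]]]; first by exists [::].
  have [x hx] := hK s; exists (x :: s); by rewrite /= hx hu hsz.
have [s [hu hsz]] := hs (size q).
case: (boolP (all (root q) s)) => h.
  by have := max_poly_roots hq h hu; rewrite hsz ltnn.
by have [t _ ht] := allPn h; exists t.
Qed.

Lemma generic2 (K : fieldType) (f g : K -> K) t1 t2 :
  infinite_field K -> pf f -> pf g -> f t1 != 0 -> g t2 != 0 ->
  exists t, f t != 0 /\ g t != 0.
Proof.
move=> hK [q hq] [r hr] h1 h2.
have hq0 : q != 0 by apply: contraNneq h1 => e; rewrite hq e horner0.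
have hr0 : r != 0 by apply: contraNneq h2 => e; rewrite hr e horner0.
have [t ht] := nonroot hK (mulf_neq0 hq0 hr0).
exists t; rewrite hq hr; rewrite hornerM mulf_eq0 negb_or in ht.
by case/andP: ht.
Qed.


Lemma nc_eval_ext (K : fieldType) (m k : nat) (p : ncpoly K m) (a b : 'I_m -> 'M[K]_k) :
  (forall l, a l = b l) -> nc_eval p a = nc_eval p b.
Proof.
by move=> h; apply: eq_bigr => t _; congr (_ *: _); apply: eq_bigr => i _; rewrite h.
Qed.

Lemma witness (K : fieldType) (m r : nat) (p : ncpoly K m) :
  const_term p = 0 -> has_order p r ->
  exists (a : 'I_m -> 'M[K]_r.+1) (w : K), w != 0 /\ (forall l, upper_tri (a l)) /\
    forall u v : 'I_r.+1, nc_eval p a u v = if ((u : nat) == 0%N) && ((v : nat) == r) then w else 0.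
Proof.
move=> hc [hr0 [hv [hnv _]]].
have [A [[a [ha hA]] hA0]] : exists A : 'M[K]_r.+1, in_pimage p A /\ A <> 0.
  case: (classic (exists A : 'M[K]_r.+1, in_pimage p A /\ A <> 0)) => // hn; exfalso.
  apply: hnv => A hA; case: (classic (A = 0)) => // hA0; exfalso; apply: hn; by exists A.
have hT := img_in_T hc hv hr0 (leqnSn r) ha.
exists a, (nc_eval p a ord0 ord_max); split; last split => //.
  apply/eqP => hw; apply: hA0; apply/matrixP => u v; rewrite -hA mxE.
  case: (boolP (((u : nat) == 0%N) && ((v : nat) == r))) => [/andP [/eqP hu /eqP hv']|huv].
    have -> : u = ord0 by apply: val_inj.
    by have -> : v = ord_max by apply: val_inj.
  apply: hT; have := ltn_ord v; move: huv; lia.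
move=> u v; case: ifP => [/andP [/eqP hu /eqP hv']|huv].
  have -> : u = ord0 by apply: val_inj.
  by have -> : v = ord_max by apply: val_inj.
apply: hT; have := ltn_ord v; move: huv; rewrite /negb; lia.
Qed.

Lemma shP (n r k : nat) (h : (k + r < n)%N) (u : 'I_r.+1) : (k + u < n)%N.
Proof. by have := ltn_ord u; lia. Qed.

Definition sh (n r k : nat) (h : (k + r < n)%N) (u : 'I_r.+1) : 'I_n := Ordinal (shP h u).

Lemma sh_mono (n r k : nat) (h : (k + r < n)%N) (u v : 'I_r.+1) :
  (u < v)%N -> (sh h u < sh h v)%N.
Proof. by rewrite /= ltn_add2l. Qed.

Lemma smono_inj (k n : nat) (s : 'I_k -> 'I_n) :
  (forall u v : 'I_k, (u < v)%N -> (s u < s v)%N) -> injective s.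
Proof.
move=> hs u v huv; case: (ltngtP u v) => h.
- by have := hs _ _ h; rewrite huv ltnn.
- by have := hs _ _ h; rewrite huv ltnn.
- exact: val_inj.
Qed.

Lemma emb_single (K : fieldType) (r n : nat) (s : 'I_r.+1 -> 'I_n) (B : 'M[K]_r.+1) (w : K) :
  (forall u v : 'I_r.+1, (u < v)%N -> (s u < s v)%N) ->
  (forall u v : 'I_r.+1, B u v = if ((u : nat) == 0%N) && ((v : nat) == r) then w else 0) ->
  forall x y, emb s B x y = if (x == s ord0) && (y == s ord_max) then w else 0.
Proof.
move=> hs hB x y; have inj := smono_inj hs.
have [hx|hx] := boolP [exists z, s z == x]; last first.
  rewrite emb_nx; last by move=> u0; apply/negP => hu0; move/negP: hx; apply; apply/existsP; exists u0.
  case: eqP => // hx0; exfalso; move/negP: hx; apply; apply/existsP; exists ord0; by rewrite hx0.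
have [hy|hy] := boolP [exists z, s z == y]; last first.
  rewrite emb_ny; last by move=> u0; apply/negP => hu0; move/negP: hy; apply; apply/existsP; exists u0.
  case: (y =P s ord_max) => hy0; rewrite ?andbF //.
  exfalso; move/negP: hy; apply; apply/existsP; exists ord_max; by rewrite hy0.
move/existsP: hx => [u1 /eqP <-]; move/existsP: hy => [v1 /eqP <-].
rewrite emb_ss // hB !(inj_eq inj).
have e1 : (u1 == ord0) = ((u1 : nat) == 0%N) by [].
have e2 : (v1 == ord_max) = ((v1 : nat) == r) by [].
by rewrite e1 e2.
Qed.

Lemma upper_comb (K : fieldType) (n : nat) (A B : 'M[K]_n) (t : K) :
  upper_tri A -> upper_tri B -> upper_tri (A + t *: (B - A)).
Proof. by move=> hA hB x y hyx; rewrite !mxE hA // hB // subrr mulr0 addr0. Qed.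

Lemma diag_all (K : fieldType) (m n r : nat) (p : ncpoly K m) :
  const_term p = 0 -> has_order p r -> infinite_field K -> (r < n)%N ->
  exists X : 'I_m -> 'M[K]_n, (forall l, upper_tri (X l)) /\
    forall i j : 'I_n, (j : nat) = (i + r)%N -> nc_eval p X i j != 0.
Proof.
move=> hc hord hK hrn.
have [a [w [hw [ha hpa]]]] := witness hc hord.
suff : forall k, (k <= n - r)%N -> exists X : 'I_m -> 'M[K]_n, (forall l, upper_tri (X l)) /\
    forall i j : 'I_n, (j : nat) = (i + r)%N -> (i < k)%N -> nc_eval p X i j != 0.
  move=> /(_ (n - r)%N (leqnn _)) [X [hX hXp]]; exists X; split => // i j hij.
  by apply: hXp => //; have := ltn_ord j; lia.
elim=> [|k IH] hk.
  exists (fun _ => 0); split => // l x y _; by rewrite mxE.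
have [X [hX hXp]] := IH (ltnW hk).
have hkr : (k + r < n)%N by lia.
pose s := sh hkr.
have hs := @sh_mono n r k hkr.
have inj := smono_inj hs.
pose Xt (t : K) (l : 'I_m) := X l + t *: (emb s (a l) - X l).
pose F t := \prod_(ij : 'I_n * 'I_n | ((ij.2 : nat) == ij.1 + r)%N && (ij.1 < k)%N)
   nc_eval p (Xt t) ij.1 ij.2.
pose G t := \prod_(ij : 'I_n * 'I_n | ((ij.2 : nat) == ij.1 + r)%N && ((ij.1 : nat) == k))
   nc_eval p (Xt t) ij.1 ij.2.
have hpf : forall x y, pf (fun t => nc_eval p (Xt t) x y).
  by apply: pfm_eval => l; apply: pfm_lin.
have pF : pf F by apply: pf_prod => ij; apply: hpf.
have pG : pf G by apply: pf_prod => ij; apply: hpf.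
have F0 : F 0 != 0.
  apply/prodf_neq0 => ij /andP [/eqP h1 h2].
  rewrite (nc_eval_ext p (b := X)); first exact: hXp.
  by move=> l; rewrite /Xt scale0r addr0.
have G1 : G 1 != 0.
  apply/prodf_neq0 => ij /andP [/eqP h1 /eqP h2].
  rewrite (nc_eval_ext p (b := fun l => emb s (a l))); last first.
    by move=> l; rewrite /Xt scale1r addrC subrK.
  rewrite -emb_eval // (emb_single hs hpa).
  have -> : ij.1 == s ord0 by apply/eqP/val_inj; rewrite /= addn0.
  by have -> : ij.2 == s ord_max by apply/eqP/val_inj; rewrite /= h1 h2.
have [t [hFt hGt]] := generic2 hK pF pG F0 G1.
exists (Xt t); split.
  by move=> l; apply: upper_comb => //; apply: emb_upper.
move=> i j hij hik; rewrite ltnS leq_eqVlt in hik.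
case/orP: hik => [/eqP hik|hik].
  by apply: (elimT (prodf_neq0 _ _) hGt (i, j)) => /=; rewrite hij hik !eqxx.
by apply: (elimT (prodf_neq0 _ _) hFt (i, j)) => /=; rewrite hij hik eqxx.
Qed.


Definition key (n x y : nat) : nat := ((y - x) * n + (n.-1 - x))%N.

Lemma keylt (n d1 d2 e1 e2 : nat) : (e1 < n)%N -> (d1 < d2)%N -> (d1 * n + e1 < d2 * n + e2)%N.
Proof.
move=> he hd; have : (d1.+1 * n <= d2 * n)%N by rewrite leq_mul2r hd orbT.
rewrite mulSn; lia.
Qed.

Lemma key_ge (n x y i j : nat) : (x < n)%N -> (i < n)%N -> (j - i <= y - x)%N -> (x <= i)%N ->
  (key n i j <= key n x y)%N.
Proof.
move=> hx hi h1 h2; rewrite /key; apply: leq_add; first by rewrite leq_mul2r h1 orbT.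
lia.
Qed.

Lemma key_gt2 (n x y i j : nat) : (x < n)%N -> (i < n)%N -> (j - i <= y - x)%N -> (x < i)%N ->
  (key n i j < key n x y)%N.
Proof.
move=> hx hi h1 h2; rewrite /key; have : ((j - i) * n <= (y - x) * n)%N by rewrite leq_mul2r h1 orbT.
lia.
Qed.

Lemma key_inj (n x y i j : nat) : (x < n)%N -> (i < n)%N -> key n x y = key n i j ->
  (y - x = j - i)%N /\ x = i.
Proof.
move=> hx hi; rewrite /key => e.
case: (ltngtP (y - x) (j - i)) => h.
- by have := keylt (n.-1 - i) (_ : (n.-1 - x < n)%N) h; rewrite e ltnn; lia.
- by have := keylt (n.-1 - x) (_ : (n.-1 - i < n)%N) h; rewrite e ltnn; lia.
- by rewrite h in e; split => //; lia.
Qed.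

Lemma key_lt_nn (n x y : nat) : (x < n)%N -> (y < n)%N -> (key n x y < n * n)%N.
Proof.
move=> hx hy; rewrite /key.
have : ((y - x) * n <= n.-1 * n)%N by rewrite leq_mul2r; apply/orP; right; lia.
have : (n.-1 * n + n = n * n)%N by case: (n) hx => // n0 _; rewrite mulSn addnC.
lia.
Qed.

Lemma t1 (K : fieldType) : (true%:R : K) = 1. Proof. by []. Qed.
Lemma f0 (K : fieldType) : (false%:R : K) = 0. Proof. by []. Qed.

Definition VT (K : fieldType) (n r : nat) (M : 'M[K]_n) := forall x y : 'I_n, (y < x + r)%N -> M x y = 0.
Definition RD (K : fieldType) (n r : nat) (M : 'M[K]_n) := forall x y : 'I_n, (y : nat) = (x + r)%N -> M x y != 0.


Lemma fill (K : fieldType) (m n r : nat) (p : ncpoly K m) (Z : 'M[K]_n) :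
  const_term p = 0 -> (0 < r)%N -> VT r Z -> RD r Z ->
  forall Y : 'M[K]_n, in_pimage p Y -> VT r Y -> RD r Y -> in_pimage p Z.
Proof.
move=> hc hr hZ hZd.
have allag : forall K0 (Y : 'M[K]_n), (n * n <= K0)%N -> in_pimage p Y ->
    (forall x y : 'I_n, (key n x y < K0)%N -> Y x y = Z x y) -> in_pimage p Z.
  move=> K0 Y hK hY hag; suff -> : Z = Y by [].
  apply/matrixP => x y; rewrite hag //; exact: leq_trans (key_lt_nn (ltn_ord x) (ltn_ord y)) hK.
suff H : forall d K0 (Y : 'M[K]_n), (n * n - K0 <= d)%N -> in_pimage p Y -> VT r Y -> RD r Y ->
    (forall x y : 'I_n, (key n x y < K0)%N -> Y x y = Z x y) -> in_pimage p Z.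
  move=> Y hY hYV hYd; apply: (H (n * n)%N 0%N Y) => //; by rewrite subn0.
elim=> [|d IH] K0 Y hd hY hYV hYd hag.
  by apply: (allag K0 Y) => //; lia.
case: (leqP (n * n) K0) => hK; first by apply: (allag K0 Y).
have step : forall (i j : 'I_n) (Y' : 'M[K]_n), (i + r <= j)%N -> key n i j = K0 -> in_pimage p Y' -> VT r Y' -> RD r Y' ->
    (forall x y : 'I_n, (key n x y < K0)%N -> Y' x y = Y x y) -> Y' i j = Z i j -> in_pimage p Z.
  move=> i j Y' hij hkey hY' hY'V hY'd hsame hfix.
  apply: (IH K0.+1 Y') => //; first lia.
  move=> x y; rewrite ltnS leq_eqVlt => /orP [/eqP hk|hk]; last by rewrite hsame // hag.
  case: (ltnP y (x + r)) => hxy; first by rewrite hY'V // hZ.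
  have [h1 h2] := key_inj (ltn_ord x) (ltn_ord i) (etrans hk (esym hkey)).
  have ex : x = i by apply: val_inj.
  have ey : y = j by apply: ord_inj; lia.
  by rewrite ex ey.
have [/existsP [[i j] /= /andP [/andP [hij /eqP hkey] hne]] | hno] :=
  boolP [exists ij : 'I_n * 'I_n, (((ij.1 + r <= ij.2)%N && (key n ij.1 ij.2 == K0)) && (Y ij.1 ij.2 != Z ij.1 ij.2))]; last first.
  apply: (IH K0.+1 Y) => //; first lia.
  move=> x y; rewrite ltnS leq_eqVlt => /orP [/eqP hk|hk]; last by rewrite hag.
  case: (ltnP y (x + r)) => hxy; first by rewrite hYV // hZ.
  apply/eqP; apply: contraNT hno => hne; apply/existsP; exists (x, y) => /=.
  by rewrite hxy hk eqxx hne.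
have upY : upper_tri Y by move=> x y h; apply: hYV; lia.
have hi_n := ltn_ord i.
case: (ltngtP j (i + r)) => hj; first lia.
  have hb : (j - r < n)%N by have := ltn_ord j; lia.
  pose b : 'I_n := Ordinal hb.
  have hib : (i < b)%N by rewrite /=; lia.
  have hbj : (j : nat) = (b + r)%N by rewrite /=; lia.
  pose t := (Z i j - Y i j) / Y b j.
  have Ybj : Y b j != 0 by apply: hYd.
  apply: (step i j (el i b t *m Y *m el i b (- t))) => //.
  - exact: elconj_img.
  - move=> x y hxy; rewrite elconj_entry // (hYV x y hxy) add0r.
    have e1 : (x == i)%:R * (t * Y b y) = 0.
      have [ex|nex] := eqVneq x i; last by rewrite f0 mul0r.
      move/(congr1 val): ex => /= ex.
      by rewrite hYV ?mulr0 //= ; lia.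
    have e2 : (y == b)%:R * (Y x i * t) = 0.
      have [ey|ney] := eqVneq y b; last by rewrite f0 mul0r.
      move/(congr1 val): ey => /= ey.
      by rewrite hYV ?mul0r ?mulr0 //; lia.
    by rewrite e1 e2 subrr.
  - move=> x y hxy; rewrite elconj_entry //.
    have e1 : (x == i)%:R * (t * Y b y) = 0.
      have [ex|nex] := eqVneq x i; last by rewrite f0 mul0r.
      move/(congr1 val): ex => /= ex.
      by rewrite hYV ?mulr0 //=; lia.
    have e2 : (y == b)%:R * (Y x i * t) = 0.
      have [ey|ney] := eqVneq y b; last by rewrite f0 mul0r.
      move/(congr1 val): ey => /= ey.
      by rewrite hYV ?mul0r ?mulr0 //; lia.
    by rewrite e1 e2 addr0 subr0; apply: hYd.
  - move=> x y hk; rewrite elconj_entry //.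
    have e1 : (x == i)%:R * (t * Y b y) = 0.
      have [ex|nex] := eqVneq x i; last by rewrite f0 mul0r.
      case: (ltnP y (b + r)) => hy; first by rewrite hYV ?mulr0.
      exfalso; move/(congr1 val): ex => /= ex.
      have := @key_ge n x y i j (ltn_ord x) hi_n; lia.
    have e2 : (y == b)%:R * (Y x i * t) = 0.
      have [ey|ney] := eqVneq y b; last by rewrite f0 mul0r.
      case: (ltnP i (x + r)) => hx; first by rewrite hYV ?mul0r ?mulr0.
      exfalso; move/(congr1 val): ey => /= ey.
      have := @key_gt2 n x y i j (ltn_ord x) hi_n; lia.
    by rewrite e1 e2 addr0 subr0.
  - have hjb : (j == b) = false by apply/eqP => e; move: hbj; rewrite {1}e; lia.
    rewrite elconj_entry // eqxx hjb mul0r subr0 mul1r /t divfK //.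
    by rewrite addrC subrK.
have hji : (j == i) = false by apply/eqP => e; move: hj; rewrite e; lia.
have Yij : Y i j != 0 by apply: hYd.
have Zij : Z i j != 0 by apply: hZd.
pose lam := Z i j / Y i j.
have hlam : lam != 0 by rewrite mulf_neq0 // invr_neq0.
apply: (step i j (diag_mx (dgv i lam) *m Y *m diag_mx (dgv i lam^-1))) => //.
- by apply: dconj_img.
- by move=> x y hxy; rewrite dconj_entry hYV // mulr0 mul0r.
- move=> x y hxy; rewrite dconj_entry mulf_neq0 ?mulf_neq0 //.
  + by case: ifP => _ //; rewrite oner_neq0.
  + by apply: hYd.
  + by case: ifP => _; rewrite ?oner_neq0 ?invr_neq0.
- move=> x y hk; rewrite dconj_entry.
  case: (ltnP y (x + r)) => hxy; first by rewrite hYV // mulr0 mul0r.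
  have hx : (x == i) = false.
    apply/negbTE/eqP => ex; have := @key_ge n x y i j (ltn_ord x) hi_n; rewrite ex in hk hxy *; lia.
  have hy : (y == i) = false.
    apply/negbTE/eqP => ey; have := @key_gt2 n x y i j (ltn_ord x) hi_n; rewrite ey in hk hxy *; lia.
  by rewrite hx hy mul1r mulr1.
- by rewrite dconj_entry eqxx hji mulr1 /lam divfK.
Qed.


Lemma toV_l (K : fieldType) (m n r : nat) (p : ncpoly K m) (A : 'M[K]_n) :
  const_term p = 0 -> has_order p r -> (r <= n)%N -> in_pimage p A -> in_Tt r.-1 A.
Proof.
move=> hc [hr0 [hv _]] hrn [X [hX <-]]; exact: img_in_T.
Qed.

Lemma realize_l (K : fieldType) (m n r : nat) (p : ncpoly K m) (Z : 'M[K]_n) :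
  const_term p = 0 -> has_order p r -> infinite_field K -> (r < n)%N ->
  in_Tt r.-1 Z -> RD r Z -> in_pimage p Z.
Proof.
move=> hc hord hK hrn hZ hZd.
have hr0 : (0 < r)%N by case: hord.
have [X [hX hXd]] := diag_all hc hord hK hrn.
have hY : in_pimage p (nc_eval p X) by exists X.
apply: (fill hc hr0 _ hZd hY) => //.
- by move=> x y h; apply: hZ; lia.
- by move=> x y h; apply: (toV_l hc hord (ltnW hrn) hY); lia.
Qed.

Lemma zero_img (K : fieldType) (m n : nat) (p : ncpoly K m) :
  const_term p = 0 -> in_pimage p (0 : 'M[K]_n).
Proof.
move=> hc; exists (fun _ => 0); split; first by move=> l x y _; rewrite mxE.
symmetry; apply: (@hom_eval K m n n (fun _ => 0) (fun _ => True) p (fun _ => 0) hc) => //=.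
- by move=> *; rewrite addr0.
- by move=> *; rewrite scaler0.
- by move=> *; rewrite mulmx0.
Qed.

Lemma emb_img (K : fieldType) (m n r : nat) (p : ncpoly K m) (a : 'I_m -> 'M[K]_r.+1)
  (s : 'I_r.+1 -> 'I_n) :
  const_term p = 0 -> (forall l, upper_tri (a l)) ->
  (forall u v : 'I_r.+1, (u < v)%N -> (s u < s v)%N) ->
  in_pimage p (emb s (nc_eval p a)).
Proof.
move=> hc ha hs; exists (fun l => emb s (a l)); split.
  by move=> l; apply: emb_upper; [exact: hs | exact: ha].
by rewrite emb_eval //; exact: smono_inj hs.
Qed.

Lemma ord_neq (n : nat) (x y : 'I_n) : (x : nat) <> y -> (x == y) = false.
Proof. by move=> h; apply/eqP => e; apply: h; rewrite e. Qed.

Lemma three (K : fieldType) (r : nat) (M M' : 'M[K]_r.+2) (h1 : (1 < r.+2)%N) (hr : (r < r.+2)%N) :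
  (0 < r)%N -> in_Tt r.-1 M -> in_Tt r.-1 M' ->
  M ord0 (Ordinal hr) = M' ord0 (Ordinal hr) ->
  M (Ordinal h1) ord_max = M' (Ordinal h1) ord_max ->
  M ord0 ord_max = M' ord0 ord_max -> M = M'.
Proof.
move=> hr0 hM hM' e1 e2 e3; apply/matrixP => x y.
case: (leqP y (x + r.-1)) => hxy; first by rewrite hM // hM'.
have hx := ltn_ord x; have hy := ltn_ord y.
case: (ltnP 0 x) => hx0.
  have ex : x = Ordinal h1 by apply: val_inj => /=; lia.
  have ey : y = ord_max by apply: val_inj => /=; lia.
  by rewrite ex ey.
have ex : x = ord0 by apply: val_inj => /=; lia.
case: (ltnP y r.+1) => hy1.
  have ey : y = Ordinal hr by apply: val_inj => /=; lia.
  by rewrite ex ey.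
have ey : y = ord_max by apply: val_inj => /=; lia.
by rewrite ex ey.
Qed.

Lemma ordE (n : nat) (x y : 'I_n) : (x == y) = ((x : nat) == y).
Proof. by []. Qed.

Lemma part2 (K : fieldType) (m r : nat) (p : ncpoly K m) :
  const_term p = 0 -> has_order p r -> infinite_field K -> (1 < r)%N ->
  forall A : 'M[K]_r.+2, in_Tt r.-1 A -> in_pimage p A.
Proof.
move=> hc hord hK hr1 A hA.
have hr0 : (0 < r)%N by lia.
have h1 : (1 < r.+2)%N by [].
have hr : (r < r.+2)%N by lia.
have toV := toV_l (n := r.+2) hc hord (ltnW hr).
have upV : forall M : 'M[K]_r.+2, in_pimage p M -> upper_tri M.
  by move=> M hM x y h; apply: (toV _ hM); lia.
have fin : forall M, in_pimage p M -> M ord0 (Ordinal hr) = A ord0 (Ordinal hr) ->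
    M (Ordinal h1) ord_max = A (Ordinal h1) ord_max -> M ord0 ord_max = A ord0 ord_max ->
    in_pimage p A.
  by move=> M hM e1 e2 e3; rewrite -(three hr0 (toV _ hM) hA e1 e2 e3).
have e0r : (0 == r)%N = false by lia.
have er0 : (r == 0)%N = false by lia.
have e1r : (1 == r)%N = false by lia.
have er1 : (r == 1)%N = false by lia.
have err1 : (r == r.+1)%N = false by lia.
have er1r : (r.+1 == r)%N = false by lia.
have er11 : (r.+1 == 1)%N = false by lia.
have [a [w [hw [ha hpa]]]] := witness hc hord.
set al := A ord0 (Ordinal hr); set be := A (Ordinal h1) ord_max; set ga := A ord0 ord_max.
have [hal|hal] := eqVneq al 0; have [hbe|hbe] := eqVneq be 0.
-
  have [hga|hga] := eqVneq ga 0.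
    apply: (fin 0 (zero_img _ hc)); rewrite mxE.
    + by symmetry; exact: hal.
    + by symmetry; exact: hbe.
    + by symmetry; exact: hga.
  have hs2 : forall u : 'I_r.+1, ((u : nat) + ((u : nat) == r) < r.+2)%N.
    by move=> u; have := ltn_ord u; case: (_ == _) => /=; lia.
  pose s2 (u : 'I_r.+1) : 'I_r.+2 := Ordinal (hs2 u).
  have mono2 : forall u v : 'I_r.+1, (u < v)%N -> (s2 u < s2 v)%N.
    move=> u v huv; rewrite /=.
    have : ((u : nat) == r) = false by have := ltn_ord v; lia.
    by move=> ->; case: (_ == _) => /=; lia.
  have hW := emb_img hc ha mono2.
  set W := emb _ _ in hW.
  have Wv : forall x y, W x y = if ((x : nat) == 0%N) && ((y : nat) == r.+1) then w else 0.
    by move=> x y; rewrite /W (emb_single mono2 hpa) !ordE /= e0r eqxx addn0 addn1.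
  have hc0 : ga / w != 0 by rewrite mulf_neq0 // invr_neq0.
  have hY1 := dconj_img ord0 hc hc0 hW.
  apply: (fin _ hY1); rewrite !dconj_entry !Wv !ordE /=;
    rewrite ?eqxx ?e0r ?er0 ?e1r ?er1 ?err1 ?er1r ?t1 ?f0 ?mulr0 ?mul0r ?mul1r ?mulr1 ?add0r ?addr0 ?subr0 ?sub0r ?er11; rewrite ?eqxx ?e0r ?er0 ?e1r ?er1 ?err1 ?er1r ?t1 ?f0 ?mulr0 ?mul0r ?mul1r ?mulr1 ?add0r ?addr0 ?subr0 ?sub0r.
  + by symmetry; exact: hal.
  + by symmetry; exact: hbe.
  + by rewrite divfK.
- have h0 : (1 + r < r.+2)%N by lia.
  have hW := emb_img hc ha (@sh_mono r.+2 r 1 h0).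
  set W := emb _ _ in hW.
  have Wv : forall x y, W x y = if ((x : nat) == 1%N) && ((y : nat) == r.+1) then w else 0.
    by move=> x y; rewrite /W (emb_single (@sh_mono r.+2 r 1 h0) hpa) !ordE.
  have hc0 : be / w != 0 by rewrite mulf_neq0 // invr_neq0.
  have hY1 := dconj_img (Ordinal h1) hc hc0 hW.
  set Y1 := _ *m _ *m _ in hY1.
  have hY2 := elconj_img (a := ord0) (b := Ordinal h1) (ga / be) hc (ltn0Sn 0) hY1.
  have upY1 := upV _ hY1.
  apply: (fin _ hY2); rewrite elconj_entry // !dconj_entry !Wv !ordE /=;
    rewrite ?eqxx ?e0r ?er0 ?e1r ?er1 ?err1 ?er1r ?t1 ?f0 ?mulr0 ?mul0r ?mul1r ?mulr1 ?add0r ?addr0 ?subr0 ?sub0r ?er11; rewrite ?eqxx ?e0r ?er0 ?e1r ?er1 ?err1 ?er1r ?t1 ?f0 ?mulr0 ?mul0r ?mul1r ?mulr1 ?add0r ?addr0 ?subr0 ?sub0r.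
  + by symmetry; exact: hal.
  + by rewrite divfK.
  + by rewrite (divfK hw) (divfK hbe).
- have h0 : (0 + r < r.+2)%N by lia.
  have hW := emb_img hc ha (@sh_mono r.+2 r 0 h0).
  set W := emb _ _ in hW.
  have Wv : forall x y, W x y = if ((x : nat) == 0%N) && ((y : nat) == r) then w else 0.
    by move=> x y; rewrite /W (emb_single (@sh_mono r.+2 r 0 h0) hpa) !ordE.
  have hc0 : al / w != 0 by rewrite mulf_neq0 // invr_neq0.
  have hY1 := dconj_img ord0 hc hc0 hW.
  set Y1 := _ *m _ *m _ in hY1.
  have hY2 := elconj_img (a := Ordinal hr) (b := ord_max) (- (ga / al)) hc (ltnSn r) hY1.
  have upY1 := upV _ hY1.
  apply: (fin _ hY2).
  + rewrite elconj_entry // !dconj_entry !Wv !ordE /=.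
    rewrite ?eqxx ?e0r ?er0 ?e1r ?er1 ?err1 ?er1r ?t1 ?f0 ?mulr0 ?mul0r ?mul1r ?mulr1 ?add0r ?addr0 ?subr0 ?sub0r ?er11; rewrite ?eqxx ?e0r ?er0 ?e1r ?er1 ?err1 ?er1r ?t1 ?f0 ?mulr0 ?mul0r ?mul1r ?mulr1 ?add0r ?addr0 ?subr0 ?sub0r.
    by rewrite divfK.
  + rewrite elconj_entry // !dconj_entry !Wv !ordE /=.
    rewrite ?eqxx ?e0r ?er0 ?e1r ?er1 ?err1 ?er1r ?t1 ?f0 ?mulr0 ?mul0r ?mul1r ?mulr1 ?add0r ?addr0 ?subr0 ?sub0r ?er11; rewrite ?eqxx ?e0r ?er0 ?e1r ?er1 ?err1 ?er1r ?t1 ?f0 ?mulr0 ?mul0r ?mul1r ?mulr1 ?add0r ?addr0 ?subr0 ?sub0r.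
    by rewrite oppr0; symmetry; exact: hbe.
  + rewrite elconj_entry // !dconj_entry !Wv !ordE /=.
    rewrite ?eqxx ?e0r ?er0 ?e1r ?er1 ?err1 ?er1r ?t1 ?f0 ?mulr0 ?mul0r ?mul1r ?mulr1 ?add0r ?addr0 ?subr0 ?sub0r ?er11; rewrite ?eqxx ?e0r ?er0 ?e1r ?er1 ?err1 ?er1r ?t1 ?f0 ?mulr0 ?mul0r ?mul1r ?mulr1 ?add0r ?addr0 ?subr0 ?sub0r.
    by rewrite divfK // mulrN opprK mulrC divfK.

- apply: (realize_l hc hord hK hr hA) => x y hxy.
  have hy := ltn_ord y.
  case: (ltnP 0 x) => hx0.
    have ex : x = Ordinal h1 by apply: val_inj => /=; lia.
    have ey : y = ord_max by apply: val_inj => /=; lia.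
    by rewrite ex ey.
  have ex : x = ord0 by apply: val_inj => /=; lia.
  have ey : y = Ordinal hr by apply: val_inj => /=; lia.
  by rewrite ex ey.
Qed.


Theorem theorem1p3 (K : fieldType) (n m r : nat) (p : ncpoly K m) :
  (2 <= n)%N -> (1 <= m)%N -> infinite_field K ->
  const_term p = 0 ->
  has_order p r -> (1 < r)%N -> (r < n.-1)%N ->
  (forall A : 'M[K]_n,
     (exists B C : 'M[K]_n, in_pimage p B /\ in_pimage p C /\ A = B + C)
     <-> in_Tt r.-1 A)
  /\ ((r = n - 2)%N ->
      forall A : 'M[K]_n, in_pimage p A <-> in_Tt (n - 3) A).
Proof.
move=> hn hm hK hc hord hr1 hrn.
have hrn' : (r < n)%N by lia.
have toV := toV_l (n := n) hc hord (ltnW hrn').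
split.
  move=> A; split.
    move=> [B [C [hB [hC ->]]]] x y hxy.
    by rewrite mxE (toV _ hB) // (toV _ hC) // addr0.
  move=> hA.
  pose b (x y : 'I_n) := xchoose (hK [:: 0; A x y]).
  have hb : forall x y, b x y \notin [:: 0; A x y] by move=> x y; exact: xchooseP (hK _).
  have hb0 : forall x y, b x y != 0.
    by move=> x y; have := hb x y; rewrite !inE negb_or => /andP [].
  have hbA : forall x y, A x y - b x y != 0.
    move=> x y; have := hb x y; rewrite !inE negb_or subr_eq0 => /andP [_].
    by rewrite eq_sym.
  exists (\matrix_(x, y) if (y : nat) == (x + r)%N then b x y else A x y).
  exists (\matrix_(x, y) if (y : nat) == (x + r)%N then A x y - b x y else 0).
  split; [|split].
  - apply: (realize_l hc hord hK hrn').
      move=> x y hxy; rewrite mxE; case: eqP => h; first lia.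
      exact: hA.
    by move=> x y hxy; rewrite mxE hxy eqxx.
  - apply: (realize_l hc hord hK hrn').
      by move=> x y hxy; rewrite mxE; case: eqP => h //; lia.
    by move=> x y hxy; rewrite mxE hxy eqxx.
  - apply/matrixP => x y; rewrite !mxE; case: eqP => _; last by rewrite addr0.
    by rewrite addrC subrK.
move=> hr2.
have en : n = r.+2 by lia.
subst n.
have e3 : (r.+2 - 3 = r.-1)%N by lia.
rewrite e3 => A; split; first exact: toV.
exact: part2 hc hord hK hr1 A.
Qed.
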